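(* Let $\mathcal T$ be a triangulation of a surface $S$ of topological type $(g,n)$ and let $\Theta:E\to[0,\pi)$ satisfy $\mathbf{(C1)}$. In Euclidean background geometry, with the change of variables $u_i=\ln r_i$, the Jacobian matrix $(\partial K_i/\partial u_j)$ of the curvature map $u\mapsto(K_1,\dots,K_{|V|})$ on $\mathbb R^{|V|}$ is symmetric and positive semi-definite; moreover, restricted to the hyperplane $\Xi_d=\{u\in\mathbb R^{|V|}:\sum_{i}u_i=d\}$ (for any $d\in\mathbb R$) it is positive definite, i.e. $x^{T}(\partial K_i/\partial u_j)x>0$ for all non-zero $x$ with $\sum_i x_i=0$.
   Context: $S$: compact oriented surface of genus $g$ with $n\ge0$ boundary circles. $\mathcal T$: vertices $V=\{v_1,\dots,v_{|V|}\}$, edges $E$, boundary vertices $V_\partial$. $\mathbf{(C1)}$: whenever $e_1,e_2,e_3$ bound a triangle, $I(e_1)+I(e_2)I(e_3)\ge0$ and cyclic analogues, $I=\cos\Theta$. For $r\in\mathbb R_+^{|V|}$, each triangle $v_iv_jv_k$ is realized as the Euclidean triangle with sides $l_{ij}=\sqrt{r_i^2+r_j^2+2r_ir_j\cos\Theta([v_i,v_j])}$ etc., glued into a Euclidean cone metric; $\sigma(v_i)$ is the total angle at $v_i$; $K_i=2\pi-\sigma(v_i)$ for interior and $\pi-\sigma(v_i)$ for boundary vertices. *)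

(* Defs.v *)
From HB Require Import structures.
From mathcomp Require Import all_boot all_order all_algebra.
From mathcomp Require Import all_classical all_reals all_analysis.
Set Implicit Arguments. Unset Strict Implicit. Unset Printing Implicit Defensive.
Import Order.TTheory GRing.Theory Num.Theory.
Local Open Scope ring_scope.

Section Triangulation.
Variable nV : nat.
(* A triangulation is given by its set of triangles, each a 3-element set of
   vertices 'I_nV (simplicial triangulation). *)
Variable T : {set {set 'I_nV}}.

Definition is_edge (e : {set 'I_nV}) : bool :=
  (#|e| == 2)%N && [exists t in T, e \subset t].

Definition edge_deg (e : {set 'I_nV}) : nat := #|[set t in T | e \subset t]|.

Definition is_bd_edge (e : {set 'I_nV}) : bool := is_edge e && (edge_deg e == 1)%N.

Definition is_bd_vertex (v : 'I_nV) : bool :=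
  [exists e : {set 'I_nV}, is_bd_edge e && (v \in e)].

Definition adj : rel 'I_nV := fun a b => (a != b) && is_edge [set a; b].

Definition link_adj (v : 'I_nV) : rel 'I_nV :=
  fun a b => [&& a != v, b != v, a != b & [set v; a; b] \in T].

(* Combinatorial triangulation of a compact connected (oriented) surface,
   possibly with boundary:
   - every triangle has exactly 3 vertices, there is at least one triangle;
   - every vertex belongs to some triangle;
   - every edge lies in one or two triangles (boundary / interior edges);
   - the link of every vertex is connected (hence a path or a cycle);
   - the 1-skeleton is connected. *)
Definition is_surface_triangulation : Prop :=
  [/\ (#|T| > 0)%N /\ (forall t, t \in T -> #|t| = 3%N),
      forall v : 'I_nV, exists2 t, t \in T & v \in t,
      forall e, is_edge e -> (edge_deg e <= 2)%N,
      forall v a b : 'I_nV, adj v a -> adj v b -> connect (link_adj v) a b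
    & forall a b : 'I_nV, connect adj a b].
End Triangulation.

Section Geometry.
Variable R : realType.
Variable nV : nat.
Variable T : {set {set 'I_nV}}.
Variable Theta : {set 'I_nV} -> R.

Definition Iw (i j : 'I_nV) : R := cos (Theta [set i; j]).

Definition C1 : Prop :=
  forall i j k : 'I_nV, [set i; j; k] \in T -> i != j -> j != k -> i != k ->
    Iw i j + Iw j k * Iw i k >= 0.

Definition elen (r : 'I_nV -> R) (i j : 'I_nV) : R :=
  Num.sqrt (r i ^+ 2 + r j ^+ 2 + 2 * r i * r j * Iw i j).

(* inner angle at vertex i of the Euclidean triangle ijk (law of cosines) *)
Definition eangle (r : 'I_nV -> R) (i j k : 'I_nV) : R :=
  acos ((elen r i j ^+ 2 + elen r i k ^+ 2 - elen r j k ^+ 2)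
        / (2 * elen r i j * elen r i k)).

Definition tri_angle (r : 'I_nV -> R) (t : {set 'I_nV}) (v : 'I_nV) : R :=
  let s := enum (t :\ v) in eangle r v (nth v s 0) (nth v s 1).

Definition cone_angle (r : 'I_nV -> R) (v : 'I_nV) : R :=
  \sum_(t in T | v \in t) tri_angle r t v.

Definition Kcurv (u : 'I_nV -> R) (i : 'I_nV) : R :=
  (if is_bd_vertex T i then pi else 2 * pi) - cone_angle (fun k => expR (u k)) i.

Definition Kslice (u : 'I_nV -> R) (i j : 'I_nV) : R -> R :=
  fun s => Kcurv (fun k => if k == j then s else u k) i.

Definition jacK (u : 'I_nV -> R) (i j : 'I_nV) : R := derive1 (Kslice u i j) (u j).

Definition quadK (u x : 'I_nV -> R) : R :=
  \sum_(i < nV) \sum_(j < nV) x i * jacK u i j * x j.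
End Geometry.

(* Main.v *)
Require Import Defs.
From HB Require Import structures.
From mathcomp Require Import all_boot all_order all_algebra.
From mathcomp Require Import all_classical all_reals all_analysis.
Import Order.TTheory GRing.Theory Num.Theory.
Set Implicit Arguments. Unset Strict Implicit.
Local Open Scope ring_scope.
From mathcomp Require Import lra ring.
Section S.
Variable R : realType.
Implicit Types (f g : R -> R) (x df dg : R).

Lemma der_sqrt f x df : is_derive x 1 f df -> 0 < f x ->
  is_derive x 1 (fun s => Num.sqrt (f s)) (df / (2 * Num.sqrt (f x))).
Proof.
move=> Hf Hpos.
have := is_derive1_comp (is_derive1_sqrt Hpos) Hf.
by rewrite mulrC.
Qed.

Lemma der_acos f x df : is_derive x 1 f df -> -1 < f x < 1 ->
  is_derive x 1 (fun s => acos (f s)) (- df / Num.sqrt (1 - f x ^+ 2)).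
Proof.
move=> Hf Hx.
have := is_derive1_comp (is_derive1_acos Hx) Hf.
by rewrite mulrC mulrN mulNr.
Qed.

Lemma der_mul f g x df dg : is_derive x 1 f df -> is_derive x 1 g dg ->
  is_derive x 1 (fun s => f s * g s) (df * g x + f x * dg).
Proof.
move=> Hf Hg.
have H := is_deriveM Hf Hg.
apply: is_derive_eq H _.
by rewrite /GRing.scale /= addrC mulrC.
Qed.

Lemma der_inv f x df : is_derive x 1 f df -> f x != 0 ->
  is_derive x 1 (fun s => (f s)^-1) (- df / f x ^+ 2).
Proof.
move=> Hf Hx.
have H := is_deriveV Hx Hf.
apply: is_derive_eq H _.
by rewrite /GRing.scale /= mulNr mulrC mulNr.
Qed.

Lemma der_add f g x df dg : is_derive x 1 f df -> is_derive x 1 g dg ->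
  is_derive x 1 (fun s => f s + g s) (df + dg).
Proof. move=> Hf Hg; exact: is_deriveD Hf Hg. Qed.

Lemma der_sub f g x df dg : is_derive x 1 f df -> is_derive x 1 g dg ->
  is_derive x 1 (fun s => f s - g s) (df - dg).
Proof. move=> Hf Hg; exact: is_deriveB Hf Hg. Qed.

Lemma der_cst (c x : R) : is_derive x 1 (fun _ : R => c) 0.
Proof. exact: is_derive_cst. Qed.

Lemma der_scal (c : R) f x df : is_derive x 1 f df ->
  is_derive x 1 (fun s => c * f s) (c * df).
Proof.
move=> Hf; have := der_mul (der_cst c x) Hf.
by rewrite mul0r add0r.
Qed.

Lemma der_exp x : is_derive x 1 (fun s : R => expR s) (expR x).
Proof. exact: is_derive_expR. Qed.

Lemma der_id x : is_derive x 1 (fun s : R => s) 1.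
Proof. exact: is_derive_id. Qed.

Lemma sqrt_eq_pos (a b : R) : 0 <= b -> a = b ^+ 2 -> Num.sqrt a = b.
Proof. by move=> hb ->; rewrite sqrtr_sqr ger0_norm. Qed.

Lemma ang_gen (S Q P : R -> R) x dS dQ dP :
  is_derive x 1 S dS -> is_derive x 1 Q dQ -> is_derive x 1 P dP ->
  0 < S x -> 0 < Q x ->
  0 < S x * Q x - ((S x + Q x - P x) / 2) ^+ 2 ->
  is_derive x 1
    (fun s => acos ((S s + Q s - P s) / (2 * Num.sqrt (S s) * Num.sqrt (Q s))))
    (- (2 * S x * Q x * ((dS + dQ - dP) / 2)
        - ((S x + Q x - P x) / 2) * (dS * Q x + S x * dQ))
     / (2 * S x * Q x * Num.sqrt (S x * Q x - ((S x + Q x - P x) / 2) ^+ 2))).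
Proof.
move=> HS HQ HP S0 Q0 D0.
have hN := der_sub (der_add HS HQ) HP.
have hsS := der_sqrt HS S0.
have hsQ := der_sqrt HQ Q0.
have hden := der_mul (der_scal 2 hsS) hsQ.
have sS0 : 0 < Num.sqrt (S x) by rewrite sqrtr_gt0.
have sQ0 : 0 < Num.sqrt (Q x) by rewrite sqrtr_gt0.
have den0 : 2 * Num.sqrt (S x) * Num.sqrt (Q x) != 0.
  by rewrite gt_eqF // !mulr_gt0.
have hinv := der_inv hden den0.
have hg := der_mul hN hinv.
have HsS : Num.sqrt (S x) ^+ 2 = S x by rewrite sqr_sqrtr // ltW.
have HsQ : Num.sqrt (Q x) ^+ 2 = Q x by rewrite sqr_sqrtr // ltW.
set D := S x * Q x - _ in D0 *.
have sD0 : 0 < Num.sqrt D by rewrite sqrtr_gt0.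
have HsD : Num.sqrt D ^+ 2 = D by rewrite sqr_sqrtr // ltW.
pose g := (S x + Q x - P x) / (2 * Num.sqrt (S x) * Num.sqrt (Q x)).
have Eg : 1 - g ^+ 2 = (Num.sqrt D / (Num.sqrt (S x) * Num.sqrt (Q x))) ^+ 2.
  rewrite /g !expr_div_n !exprMn HsS HsQ sqr_sqrtr ?(ltW D0) // /D; field.
  by rewrite !gt_eqF.
have gb : -1 < g < 1.
  have : 0 < 1 - g ^+ 2 by rewrite Eg exprn_gt0 // divr_gt0 // mulr_gt0.
  move=> h; apply/andP; split; nra.
have hac := der_acos hg gb.
apply: is_derive_eq hac _.
rewrite Eg sqrtr_sqr ger0_norm; last by rewrite ltW // divr_gt0 // mulr_gt0.
rewrite /g.
move: (Num.sqrt D) sD0 HsD => sD sD0 HsD.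
move: (Num.sqrt (S x)) sS0 HsS => sS sS0 HsS.
move: (Num.sqrt (Q x)) sQ0 HsQ => sQ sQ0 HsQ.
rewrite -HsS -HsQ.
field.
by rewrite !gt_eqF.
Qed.

Definition sq (x y c : R) := x ^+ 2 + y ^+ 2 + 2 * x * y * c.
Definition D3 (x y z a b c : R) :=
  x^+2*y^+2*(1-a^+2) + x^+2*z^+2*(1-b^+2) + y^+2*z^+2*(1-c^+2)
  + 2*x*y*z*(z*(a+c*b) + y*(b+c*a) + x*(c+a*b)).
Definition Wf (x y z a b c : R) :=
  x*y*(x*y*(1-a^+2) + x*z*(c+b*a) + y*z*(b+c*a)) / (Num.sqrt (D3 x y z a b c) * sq x y a).

Lemma sq_gt0 x y c : 0 < x -> 0 < y -> -1 < c -> 0 < sq x y c.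
Proof.
move=> hx hy hc; rewrite /sq.
have -> : x ^+ 2 + y ^+ 2 + 2 * x * y * c = (x - y) ^+ 2 + 2 * x * y * (1 + c) by ring.
apply: ltr_wpDl; first exact: sqr_ge0.
by rewrite !mulr_gt0 //; lra.
Qed.

Lemma D3_perm1 x y z a b c : D3 y x z a c b = D3 x y z a b c.
Proof. rewrite /D3; ring. Qed.
Lemma D3_perm2 x y z a b c : D3 x z y b a c = D3 x y z a b c.
Proof. rewrite /D3; ring. Qed.

Lemma D3_gt0 x y z a b c : 0 < x -> 0 < y -> 0 < z ->
  -1 < a <= 1 -> -1 < b <= 1 -> -1 < c <= 1 ->
  0 <= c + a * b -> 0 <= b + c * a -> 0 <= a + c * b ->
  0 < D3 x y z a b c.
Proof.
move=> hx hy hz /andP[a1 a2] /andP[b1 b2] /andP[c1 c2] h1 h2 h3.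
have xy : 0 < x * y by apply: mulr_gt0.
have xz : 0 < x * z by apply: mulr_gt0.
have yz : 0 < y * z by apply: mulr_gt0.
have xyz : 0 < x * y * z by apply: mulr_gt0.
have t1 : 0 <= x^+2*y^+2*(1-a^+2).
  by apply: mulr_ge0; [apply: mulr_ge0; apply: sqr_ge0|nra].
have t2 : 0 <= x^+2*z^+2*(1-b^+2).
  by apply: mulr_ge0; [apply: mulr_ge0; apply: sqr_ge0|nra].
have t3 : 0 <= y^+2*z^+2*(1-c^+2).
  by apply: mulr_ge0; [apply: mulr_ge0; apply: sqr_ge0|nra].
have t4 : 0 <= z*(a+c*b) + y*(b+c*a) + x*(c+a*b).
  by apply: addr_ge0; [apply: addr_ge0|]; apply: mulr_ge0 => //; apply: ltW.
rewrite /D3.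
have [alt|age] := ltP a 1.
  have : 0 < x^+2*y^+2*(1-a^+2).
    by apply: mulr_gt0; [apply: mulr_gt0; apply: exprn_gt0|nra].
  have : 0 <= 2*x*y*z*(z*(a+c*b) + y*(b+c*a) + x*(c+a*b)).
    by apply: mulr_ge0 => //; rewrite -!mulrA; apply: mulr_ge0 => //; apply: ltW; rewrite mulrA.
  lra.
have a1' : a = 1 by apply/eqP; rewrite eq_le a2 age.
subst a.
have [blt|bge] := ltP b 1.
  have : 0 < x^+2*z^+2*(1-b^+2).
    by apply: mulr_gt0; [apply: mulr_gt0; apply: exprn_gt0|nra].
  have : 0 <= 2*x*y*z*(z*(1+c*b) + y*(b+c*1) + x*(c+1*b)).
    by apply: mulr_ge0 => //; rewrite -!mulrA; apply: mulr_ge0 => //; apply: ltW; rewrite mulrA.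
  lra.
have b1' : b = 1 by apply/eqP; rewrite eq_le b2 bge.
subst b.
have : 0 < 2*x*y*z*(z*(1+c*1) + y*(1+c*1) + x*(c+1*1)).
  apply: mulr_gt0; first by rewrite -!mulrA; apply: mulr_gt0 => //; rewrite mulrA.
  rewrite !mulr1.
  have : 0 < z * (1 + c) by apply: mulr_gt0 => //; lra.
  have : 0 < y * (1 + c) by apply: mulr_gt0 => //; lra.
  have : 0 < x * (c + 1) by apply: mulr_gt0 => //; lra.
  lra.
lra.
Qed.

Lemma der_sqf (f g : R -> R) (c s0 df dg : R) :
  is_derive s0 1 f df -> is_derive s0 1 g dg ->
  is_derive s0 1 (fun s => sq (f s) (g s) c)
    (2 * f s0 * df + 2 * g s0 * dg + 2 * c * (df * g s0 + f s0 * dg)).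
Proof.
move=> Hf Hg.
have H := der_add (der_add (der_mul Hf Hf) (der_mul Hg Hg))
   (der_scal (2 * c) (der_mul Hf Hg)).
have -> : (fun s => sq (f s) (g s) c) =
  (fun s => f s * f s + g s * g s + 2 * c * (f s * g s)).
  by apply: funext => s; rewrite /sq; ring.
by apply: is_derive_eq H _; ring.
Qed.

Lemma ang_tri (f g h : R -> R) (s0 ex ey ez a b c : R) :
  (forall s, 0 < f s) -> (forall s, 0 < g s) -> (forall s, 0 < h s) ->
  is_derive s0 1 f (ex * f s0) -> is_derive s0 1 g (ey * g s0) ->
  is_derive s0 1 h (ez * h s0) ->
  -1 < a <= 1 -> -1 < b <= 1 -> -1 < c <= 1 ->
  0 <= c + a * b -> 0 <= b + c * a -> 0 <= a + c * b ->
  is_derive s0 1 (fun s => acos ((Num.sqrt (sq (f s) (g s) a) ^+ 2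
       + Num.sqrt (sq (f s) (h s) b) ^+ 2 - Num.sqrt (sq (g s) (h s) c) ^+ 2)
       / (2 * Num.sqrt (sq (f s) (g s) a) * Num.sqrt (sq (f s) (h s) b))))
    (Wf (f s0) (g s0) (h s0) a b c * (ey - ex)
     + Wf (f s0) (h s0) (g s0) b a c * (ez - ex)).
Proof.
move=> fp gp hp Hf Hg Hh ha hb hc h1 h2 h3.
have a1 : -1 < a by case/andP: ha.
have b1 : -1 < b by case/andP: hb.
have c1 : -1 < c by case/andP: hc.
have -> : (fun s => acos ((Num.sqrt (sq (f s) (g s) a) ^+ 2
       + Num.sqrt (sq (f s) (h s) b) ^+ 2 - Num.sqrt (sq (g s) (h s) c) ^+ 2)
       / (2 * Num.sqrt (sq (f s) (g s) a) * Num.sqrt (sq (f s) (h s) b)))) =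
   (fun s => acos (((fun s => sq (f s) (g s) a) s + (fun s => sq (f s) (h s) b) s
        - (fun s => sq (g s) (h s) c) s)
       / (2 * Num.sqrt ((fun s => sq (f s) (g s) a) s)
            * Num.sqrt ((fun s => sq (f s) (h s) b) s)))).
  by apply: funext => s /=; rewrite !sqr_sqrtr // ltW // sq_gt0.
have HS := der_sqf a Hf Hg.
have HQ := der_sqf b Hf Hh.
have HP := der_sqf c Hg Hh.
have S0 : 0 < sq (f s0) (g s0) a by apply: sq_gt0.
have Q0 : 0 < sq (f s0) (h s0) b by apply: sq_gt0.
have ED : sq (f s0) (g s0) a * sq (f s0) (h s0) b -
    ((sq (f s0) (g s0) a + sq (f s0) (h s0) b - sq (g s0) (h s0) c) / 2) ^+ 2
    = D3 (f s0) (g s0) (h s0) a b c.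
  by rewrite /sq /D3; field.
have D0 : 0 < D3 (f s0) (g s0) (h s0) a b c by apply: D3_gt0.
have := @ang_gen (fun s => sq (f s) (g s) a) (fun s => sq (f s) (h s) b)
   (fun s => sq (g s) (h s) c) s0 _ _ _ HS HQ HP S0 Q0.
rewrite /= ED => /(_ D0) H.
apply: is_derive_eq H _.
rewrite /Wf (D3_perm2 (f s0) (g s0) (h s0)).
have sD0 : 0 < Num.sqrt (D3 (f s0) (g s0) (h s0) a b c) by rewrite sqrtr_gt0.
move: (Num.sqrt (D3 (f s0) (g s0) (h s0) a b c)) sD0 => sD sD0.
move: S0 Q0; rewrite /sq => S0 Q0.
field.
by rewrite !gt_eqF.
Qed.

Lemma sqC x y a : sq y x a = sq x y a.
Proof. by rewrite /sq; ring. Qed.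

Lemma Wf_sym x y z a b c : Wf y x z a c b = Wf x y z a b c.
Proof. by rewrite /Wf D3_perm1 sqC; congr (_ / _); ring. Qed.

Definition hh (x y z a b c : R) := x*y*(1-a^+2) + x*z*(c+b*a) + y*z*(b+c*a).

Lemma Wf_hh x y z a b c : Wf x y z a b c =
  x * y * hh x y z a b c / (Num.sqrt (D3 x y z a b c) * sq x y a).
Proof. by []. Qed.

Lemma hh_ge0 x y z a b c : 0 < x -> 0 < y -> 0 < z ->
  -1 < a <= 1 -> 0 <= c + a * b -> 0 <= b + c * a -> 0 <= hh x y z a b c.
Proof.
move=> hx hy hz /andP[a1 a2] h1 h2; rewrite /hh.
have xy : 0 < x * y by apply: mulr_gt0.
have xz : 0 < x * z by apply: mulr_gt0.
have yz : 0 < y * z by apply: mulr_gt0.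
apply: addr_ge0; first apply: addr_ge0.
- by apply: mulr_ge0; [apply: ltW|nra].
- by apply: mulr_ge0; [apply: ltW|rewrite mulrC].
- by apply: mulr_ge0; [apply: ltW|].
Qed.

Lemma hh_pair x y z a b c : 0 < x -> 0 < y -> 0 < z ->
  -1 < a <= 1 -> -1 < b <= 1 -> -1 < c <= 1 ->
  0 <= c + a * b -> 0 <= b + c * a -> 0 <= a + c * b ->
  0 < hh x y z a b c + hh x z y b a c.
Proof.
move=> hx hy hz ha hb hc h1 h2 h3.
have H1 := hh_ge0 hx hy hz ha h1 h2.
have H2 : 0 <= hh x z y b a c.
  by apply: hh_ge0 => //; rewrite mulrC.
move: ha hb hc => /andP[a1 a2] /andP[b1 b2] /andP[c1 c2].
have xy : 0 < x * y by apply: mulr_gt0.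
have xz : 0 < x * z by apply: mulr_gt0.
have yz : 0 < y * z by apply: mulr_gt0.
have [alt|age] := ltP a 1.
  suff : 0 < hh x y z a b c by lra.
  rewrite /hh.
  have : 0 < x*y*(1-a^+2) by apply: mulr_gt0 => //; nra.
  have : 0 <= x*z*(c+b*a) by apply: mulr_ge0; [apply: ltW|rewrite mulrC].
  have : 0 <= y*z*(b+c*a) by apply: mulr_ge0; [apply: ltW|].
  lra.
have a1' : a = 1 by apply/eqP; rewrite eq_le a2 age.
subst a.
have [blt|bge] := ltP b 1.
  suff : 0 < hh x z y b 1 c by lra.
  rewrite /hh.
  have : 0 < x*z*(1-b^+2) by apply: mulr_gt0 => //; nra.
  have : 0 <= x*y*(c+1*b) by apply: mulr_ge0; [apply: ltW|lra].
  have : 0 <= z*y*(1+c*b) by apply: mulr_ge0; [rewrite mulrC; apply: ltW|lra].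
  lra.
have b1' : b = 1 by apply/eqP; rewrite eq_le b2 bge.
subst b.
suff : 0 < hh x y z 1 1 c by lra.
rewrite /hh.
have : 0 <= x*y*(1-1^+2) by rewrite expr1n subrr mulr0.
have : 0 < x*z*(c+1*1) by apply: mulr_gt0 => //; lra.
have : 0 <= y*z*(1+c*1) by apply: mulr_ge0; [apply: ltW|lra].
lra.
Qed.

Lemma Wf_ge0 x y z a b c : 0 < x -> 0 < y -> 0 < z ->
  -1 < a <= 1 -> -1 < b <= 1 -> -1 < c <= 1 ->
  0 <= c + a * b -> 0 <= b + c * a -> 0 <= a + c * b ->
  0 <= Wf x y z a b c.
Proof.
move=> hx hy hz ha hb hc h1 h2 h3.
rewrite Wf_hh; apply: divr_ge0.
  by apply: mulr_ge0; [apply: ltW; apply: mulr_gt0|apply: hh_ge0].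
apply: ltW; apply: mulr_gt0; first by rewrite sqrtr_gt0; apply: D3_gt0.
apply: sq_gt0 => //; by case/andP: ha.
Qed.

Lemma Wf_pair x y z a b c : 0 < x -> 0 < y -> 0 < z ->
  -1 < a <= 1 -> -1 < b <= 1 -> -1 < c <= 1 ->
  0 <= c + a * b -> 0 <= b + c * a -> 0 <= a + c * b ->
  0 < Wf x y z a b c + Wf x z y b a c.
Proof.
move=> hx hy hz ha hb hc h1 h2 h3.
have h1' : 0 <= c + b * a by rewrite mulrC.
have h2' : 0 <= a + c * b by [].
have h3' : 0 <= b + c * a by [].
have P := hh_pair hx hy hz ha hb hc h1 h2 h3.
have A1 := hh_ge0 hx hy hz ha h1 h2.
have A2 : 0 <= hh x z y b a c by apply: hh_ge0 => //; rewrite mulrC.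
have W1 := Wf_ge0 hx hy hz ha hb hc h1 h2 h3.
have W2 : 0 <= Wf x z y b a c by apply: Wf_ge0 => //; rewrite mulrC.
have D1 : 0 < Num.sqrt (D3 x y z a b c) * sq x y a.
  apply: mulr_gt0; first by rewrite sqrtr_gt0; apply: D3_gt0.
  by apply: sq_gt0 => //; case/andP: ha.
have D2 : 0 < Num.sqrt (D3 x z y b a c) * sq x z b.
  apply: mulr_gt0; first by rewrite sqrtr_gt0 D3_perm2; apply: D3_gt0.
  by apply: sq_gt0 => //; case/andP: hb.
have [hpos|hz0] := ltP 0 (hh x y z a b c).
  suff : 0 < Wf x y z a b c by lra.
  by rewrite Wf_hh; apply: divr_gt0 => //; apply: mulr_gt0 => //; apply: mulr_gt0.
have hpos : 0 < hh x z y b a c by lra.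
suff : 0 < Wf x z y b a c by lra.
by rewrite Wf_hh; apply: divr_gt0 => //; apply: mulr_gt0 => //; apply: mulr_gt0.
Qed.

Lemma der_big (I : Type) (r : seq I) (P : pred I) (F : I -> R -> R)
    (dF : I -> R) (x : R) :
  (forall i, P i -> is_derive x 1 (F i) (dF i)) ->
  is_derive x 1 (fun s => \sum_(i <- r | P i) F i s) (\sum_(i <- r | P i) dF i).
Proof.
move=> H; elim: r => [|a r IH].
  have -> : (fun s => \sum_(i <- [::] | P i) F i s) = (fun _ => 0).
    by apply: funext => s; rewrite big_nil.
  by rewrite big_nil; exact: der_cst.
have [Pa|nPa] := boolP (P a).
  have -> : (fun s => \sum_(i <- a :: r | P i) F i s) =
     (fun s => F a s + \sum_(i <- r | P i) F i s).
    by apply: funext => s; rewrite big_cons Pa.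
  by rewrite big_cons Pa; apply: der_add => //; apply: H.
have -> : (fun s => \sum_(i <- a :: r | P i) F i s) =
   (fun s => \sum_(i <- r | P i) F i s).
  by apply: funext => s; rewrite big_cons (negbTE nPa).
by rewrite big_cons (negbTE nPa).
Qed.

Lemma kernel3 (w1 w2 w3 d1 d2 : R) : 0 <= w1 -> 0 <= w2 -> 0 <= w3 ->
  0 < w1 + w2 -> 0 < w1 + w3 -> 0 < w2 + w3 ->
  w1 * d1 ^+ 2 + w2 * d2 ^+ 2 + w3 * (d2 - d1) ^+ 2 = 0 -> d1 = 0 /\ d2 = 0.
Proof.
move=> h1 h2 h3 p12 p13 p23 E.
have t1 : 0 <= w1 * d1 ^+ 2 by apply: mulr_ge0 => //; apply: sqr_ge0.
have t2 : 0 <= w2 * d2 ^+ 2 by apply: mulr_ge0 => //; apply: sqr_ge0.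
have t3 : 0 <= w3 * (d2 - d1) ^+ 2 by apply: mulr_ge0 => //; apply: sqr_ge0.
have e1 : w1 * d1 ^+ 2 == 0 by rewrite eq_le t1 andbT; lra.
have e2 : w2 * d2 ^+ 2 == 0 by rewrite eq_le t2 andbT; lra.
have e3 : w3 * (d2 - d1) ^+ 2 == 0 by rewrite eq_le t3 andbT; lra.
move: e1 e2 e3; rewrite !mulf_eq0 !orbb subr_eq0.
by case/orP => /eqP a1; case/orP => /eqP a2; case/orP => /eqP a3; split; lra.
Qed.
End S.

Section Geo.
Variable R : realType.
Variable nV : nat.
Variable T : {set {set 'I_nV}}.
Variable Theta : {set 'I_nV} -> R.
Hypothesis HTh : forall e, is_edge T e -> 0 <= Theta e < pi.
Hypothesis HC1 : C1 T Theta.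

Local Notation Iv := (Iw Theta).

Lemma IwC i j : Iv i j = Iv j i.
Proof. by rewrite /Iw finset.setUC. Qed.

Lemma cos_gtN1 (th : R) : 0 <= th < pi -> -1 < cos th.
Proof.
move=> /andP[h0 h1]; rewrite lt_neqAle cos_geN1 andbT; apply/eqP => h.
have : acos (cos th) = th by apply: cosK; rewrite in_itv /= h0 ltW.
by rewrite -h acosN1 => E; move: h1; rewrite E ltxx.
Qed.

Lemma edge_of_tri t i j : t \in T -> i \in t -> j \in t -> i != j ->
  is_edge T [set i; j].
Proof.
move=> tT it jt ij; rewrite /is_edge cards2 ij /=.
apply/existsP; exists t; rewrite tT /=.
by apply/fintype.subsetP => k; rewrite !inE => /orP[/eqP->|/eqP->].
Qed.

Lemma Iw_bnd t i j : t \in T -> i \in t -> j \in t -> i != j ->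
  -1 < Iv i j <= 1.
Proof.
move=> tT it jt ij; rewrite /Iw cos_le1 andbT; apply: cos_gtN1.
exact/HTh/(edge_of_tri tT).
Qed.

Lemma decomp (t : {set 'I_nV}) (i : 'I_nV) : #|t| = 3%N -> i \in t ->
  exists p q, [/\ i != p, i != q, p != q & t = [set i; p; q]].
Proof.
move=> ct it.
have : #|t :\ i| == 2%N by move/eqP: ct; rewrite (cardsD1 i) it add1n eqSS.
case/cards2P => p [q [pq E]].
have pin : p \in t :\ i by rewrite E !inE eqxx.
have qin : q \in t :\ i by rewrite E !inE eqxx orbT.
move: pin qin; rewrite !inE => /andP[pi _] /andP[qi _].
exists p, q; split => //; try by rewrite eq_sym.
rewrite -(finset.setD1K it) E; apply/setP => k; rewrite !inE.
by rewrite orbA.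
Qed.

Lemma enum2 (p q : 'I_nV) : p != q ->
  enum [set p; q] = [:: p; q] \/ enum [set p; q] = [:: q; p].
Proof.
move=> pq.
have hs : size (enum [set p; q]) = 2%N by rewrite -cardE cards2 pq.
have hu := enum_uniq [set p; q].
have hm : forall x, (x \in enum [set p; q]) = (x \in [set p; q]) by move=> x; rewrite mem_enum.
move: hs hu hm; case: (enum _) => [|a [|b [|c s]]] //= _.
rewrite inE andbT => ab hm.
have := hm a; have := hm b; rewrite !inE !eqxx /= orbT => /esym hb /esym ha.
case/orP: ha => /eqP ha; case/orP: hb => /eqP hb; subst.
- by rewrite eqxx in ab.
- by left.
- by right.
- by rewrite eqxx in ab.
Qed.

Lemma elenC r p q : elen Theta r p q = elen Theta r q p.
Proof. by rewrite /elen IwC; congr Num.sqrt; ring. Qed.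

Lemma eangleC r i p q : eangle Theta r i p q = eangle Theta r i q p.
Proof.
by rewrite /eangle (elenC r q p) (addrC (elen Theta r i q ^+ 2)) mulrAC.
Qed.

Lemma tri_angle_eq r t i p q : i != p -> i != q -> p != q ->
  t = [set i; p; q] -> tri_angle Theta r t i = eangle Theta r i p q.
Proof.
move=> ip iq pq ->; rewrite /tri_angle.
have -> : [set i; p; q] :\ i = [set p; q].
  apply/setP => k; rewrite !inE.
  case: (eqVneq k i) => [->|]; first by rewrite (negbTE ip) (negbTE iq).
  by [].
case: (enum2 pq) => ->; first by [].
by rewrite eangleC.
Qed.

Lemma c1_inst t i p q : t \in T -> t = [set i; p; q] ->
  i != p -> i != q -> p != q ->
  [/\ 0 <= Iv p q + Iv i p * Iv i q, 0 <= Iv i q + Iv p q * Iv i p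
    & 0 <= Iv i p + Iv p q * Iv i q].
Proof.
move=> tT Et ip iq pq; rewrite Et in tT.
have HC := HC1; rewrite /C1 in HC.
have e1 : [set p; q; i] = [set i; p; q].
  by apply/setP => k; rewrite !inE; do ![case: (_ == _)].
have e2 : [set i; q; p] = [set i; p; q].
  by apply/setP => k; rewrite !inE; do ![case: (_ == _)].
split.
- have t1 : [set p; q; i] \in T by rewrite e1.
  have := HC p q i t1 pq; rewrite eq_sym iq eq_sym ip => /(_ isT isT).
  by rewrite (IwC q i) (IwC p i) mulrC.
- have t2 : [set i; q; p] \in T by rewrite e2.
  have := HC i q p t2 iq; rewrite eq_sym pq => /(_ isT ip).
  by rewrite (IwC q p).
- exact: (HC i p q tT ip pq iq).
Qed.

Lemma rho_der (u : 'I_nV -> R) j k :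
  is_derive (u j) 1 (fun s => expR (if k == j then s else u k))
    ((k == j)%:R * expR (if k == j then u j else u k)).
Proof.
case: eqP => _; first by rewrite mul1r; exact: der_exp.
by rewrite mul0r; exact: der_cst.
Qed.

Definition Wv (u : 'I_nV -> R) i p q :=
  Wf (expR (u i)) (expR (u p)) (expR (u q)) (Iv i p) (Iv i q) (Iv p q).

Lemma tri_der (u : 'I_nV -> R) t i p q j : t \in T -> t = [set i; p; q] ->
  i != p -> i != q -> p != q ->
  is_derive (u j) 1
    (fun s => tri_angle Theta (fun k => expR (if k == j then s else u k)) t i)
    (Wv u i p q * ((p == j)%:R - (i == j)%:R)
     + Wv u i q p * ((q == j)%:R - (i == j)%:R)).
Proof.
move=> tT Et ip iq pq.
have it : i \in t by rewrite Et !inE eqxx.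
have pt : p \in t by rewrite Et !inE eqxx orbT.
have qt : q \in t by rewrite Et !inE eqxx !orbT.
have [h1 h2 h3] := c1_inst tT Et ip iq pq.
have H := ang_tri (fun s => expR_gt0 _) (fun s => expR_gt0 _) (fun s => expR_gt0 _)
  (rho_der u j i) (rho_der u j p) (rho_der u j q)
  (Iw_bnd tT it pt ip) (Iw_bnd tT it qt iq) (Iw_bnd tT pt qt pq) h1 h2 h3.
have E k : (if k == j then u j else u k) = u k by case: eqP => // ->.
rewrite !E in H.
have -> : (fun s => tri_angle Theta (fun k => expR (if k == j then s else u k)) t i)
  = (fun s => eangle Theta (fun k => expR (if k == j then s else u k)) i p q).
  by apply: funext => s; rewrite (tri_angle_eq _ ip iq pq Et).
rewrite /Wv -(IwC q p).
have -> : Iv q p = Iv p q by rewrite IwC.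
exact: H.
Qed.

Hypothesis Hsurf : is_surface_triangulation T.

Lemma card3 t : t \in T -> #|t| = 3%N.
Proof. by case: Hsurf => -[_ H] _ _ _ _; apply: H. Qed.

Definition dA (u : 'I_nV -> R) t i j :=
  derive1 (fun s => tri_angle Theta (fun k => expR (if k == j then s else u k)) t i) (u j).

Lemma dA_val (u : 'I_nV -> R) (t : {set 'I_nV}) (i p q j : 'I_nV) : t \in T -> t = [set i; p; q] ->
  i != p -> i != q -> p != q ->
  dA u t i j = Wv u i p q * ((p == j)%:R - (i == j)%:R)
     + Wv u i q p * ((q == j)%:R - (i == j)%:R).
Proof.
move=> tT Et ip iq pq; rewrite /dA derive1E.
exact: (@derive_val _ _ _ _ _ _ _ (tri_der u j tT Et ip iq pq)).
Qed.

Lemma tri_der_any (u : 'I_nV -> R) (t : {set 'I_nV}) (i j : 'I_nV) : t \in T -> i \in t ->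
  is_derive (u j) 1
    (fun s => tri_angle Theta (fun k => expR (if k == j then s else u k)) t i)
    (dA u t i j).
Proof.
move=> tT it; have [p [q [ip iq pq Et]]] := decomp (card3 tT) it.
rewrite (dA_val u j tT Et ip iq pq); exact: tri_der.
Qed.

Lemma Kslice_der (u : 'I_nV -> R) (i j : 'I_nV) : is_derive (u j) 1 (Kslice T Theta u i j)
  (- \sum_(t in T | i \in t) dA u t i j).
Proof.
rewrite /Kslice /Kcurv /cone_angle.
have H := @der_big R _ (index_enum {set 'I_nV}) (fun t => (t \in T) && (i \in t))
  (fun t s => tri_angle Theta (fun k => expR (if k == j then s else u k)) t i)
  (fun t => dA u t i j) (u j).
have := der_sub (der_cst (if is_bd_vertex T i then pi else 2 * pi) (u j))
  (H (fun t => fun h => tri_der_any u j (proj1 (andP h)) (proj2 (andP h)))).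
by rewrite sub0r.
Qed.

Lemma jacK_eq (u : 'I_nV -> R) (i j : 'I_nV) : jacK T Theta u i j = - \sum_(t in T | i \in t) dA u t i j.
Proof. by rewrite /jacK derive1E (@derive_val _ _ _ _ _ _ _ (Kslice_der u i j)). Qed.

Lemma dA_zero (u : 'I_nV -> R) (t : {set 'I_nV}) (i j : 'I_nV) :
  t \in T -> i \in t -> j \notin t -> dA u t i j = 0.
Proof.
move=> tT it jt; have [p [q [ip iq pq Et]]] := decomp (card3 tT) it.
rewrite (dA_val u j tT Et ip iq pq).
have F k : k \in t -> (k == j) = false.
  by move=> kt; apply/eqP => E; rewrite -E kt in jt.
rewrite (F i it) (F p) ?(F q) ?Et ?inE ?eqxx ?orbT //.
by rewrite subrr !mulr0 addr0.
Qed.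

Lemma decomp2 (t : {set 'I_nV}) (i j : 'I_nV) : t \in T -> i \in t -> j \in t -> i != j ->
  exists k, [/\ i != k, j != k & t = [set i; j; k]].
Proof.
move=> tT it jt ij; have [p [q [ip iq pq Et]]] := decomp (card3 tT) it.
move: (jt); rewrite Et !inE => /orP[/orP[/eqP E|/eqP E]|/eqP E].
- by rewrite E eqxx in ij.
- by exists q; subst j; split.
- exists p; subst j; split => //; first by rewrite eq_sym.
  by (try rewrite Et); apply/setP => k; rewrite !inE; do ![case: (_ == _)].
Qed.

Lemma Wv_sym (u : 'I_nV -> R) i p q : Wv u p i q = Wv u i p q.
Proof. by rewrite /Wv (IwC p i) Wf_sym. Qed.

Lemma dA_sym (u : 'I_nV -> R) (t : {set 'I_nV}) (i j : 'I_nV) :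
  t \in T -> i \in t -> j \in t -> dA u t i j = dA u t j i.
Proof.
move=> tT it jt; case: (eqVneq i j) => [->//|ij].
have [k [ik jk Et]] := decomp2 tT it jt ij.
have Et' : t = [set j; i; k].
  by rewrite Et; apply/setP => x; rewrite !inE; do ![case: (_ == _)].
have ji : j != i by rewrite eq_sym.
rewrite (dA_val u j tT Et ij ik jk) (dA_val u i tT Et' ji jk ik).
rewrite !eqxx (negbTE ij) (negbTE ji) (eq_sym k i) (eq_sym k j) (negbTE ik) (negbTE jk).
rewrite (Wv_sym u i j k); ring.
Qed.

Lemma jac_sym (u : 'I_nV -> R) (i j : 'I_nV) :
  jacK T Theta u i j = jacK T Theta u j i.
Proof.
rewrite !jacK_eq; congr (- _).
rewrite big_mkcondr [RHS]big_mkcondr /=; apply: eq_bigr => t tT.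
case it: (i \in t); case jt: (j \in t) => //.
- exact: dA_sym.
- by rewrite dA_zero // jt.
- by rewrite dA_zero // it.
Qed.

Definition qt (u x : 'I_nV -> R) (t : {set 'I_nV}) :=
  \sum_(i < nV) \sum_(j < nV) (if i \in t then - (x i * dA u t i j * x j) else 0).

Lemma quad_split (u x : 'I_nV -> R) :
  quadK T Theta u x = \sum_(t in T) qt u x t.
Proof.
rewrite /quadK /qt.
have E : forall i j : 'I_nV, x i * jacK T Theta u i j * x j =
   \sum_(t in T) (if i \in t then - (x i * dA u t i j * x j) else 0).
  move=> i j; rewrite jacK_eq mulrN mulNr big_mkcondr /= big_distrr /= big_distrl /=.
  rewrite -sumrN; apply: eq_bigr => t _.
  by case: (i \in t); rewrite ?mulr0 ?mul0r ?oppr0.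
under eq_bigr => i _ do under eq_bigr => j _ do rewrite E.
under eq_bigr => i _ do rewrite exchange_big.
by rewrite exchange_big.
Qed.

Lemma sum3 (F : 'I_nV -> R) (a b c : 'I_nV) : a != b -> a != c -> b != c ->
  (forall k, k \notin [set a; b; c] -> F k = 0) ->
  \sum_(k < nV) F k = F a + F b + F c.
Proof.
move=> ab ac bc H.
rewrite (bigD1 a) // (bigD1 b) /=; last by rewrite eq_sym.
rewrite (bigD1 c) /=; last by rewrite !(eq_sym c) ac bc.
rewrite big1 ?addr0 ?addrA // => k /andP[/andP[ka kb] kc].
by apply: H; rewrite !inE (negbTE ka) (negbTE kb) (negbTE kc).
Qed.

Lemma qt_form (u x : 'I_nV -> R) (t : {set 'I_nV}) (a b c : 'I_nV) :
  t \in T -> t = [set a; b; c] -> a != b -> a != c -> b != c ->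
  qt u x t = Wv u a b c * (x a - x b) ^+ 2 + Wv u a c b * (x a - x c) ^+ 2
     + Wv u b c a * (x b - x c) ^+ 2.
Proof.
move=> tT Et ab ac bc.
have ba : b != a by rewrite eq_sym.
have ca : c != a by rewrite eq_sym.
have cb : c != b by rewrite eq_sym.
have Etb : t = [set b; a; c].
  by rewrite Et; apply/setP => k; rewrite !inE; do ![case: (_ == _)].
have Etc : t = [set c; a; b].
  by rewrite Et; apply/setP => k; rewrite !inE; do ![case: (_ == _)].
have Hn k : k \notin [set a; b; c] -> k \notin t by rewrite Et.
have S v : v \in t -> \sum_(j < nV) (if v \in t then - (x v * dA u t v j * x j) else 0)
   = - (x v * dA u t v a * x a) - (x v * dA u t v b * x b) - (x v * dA u t v c * x c).
  move=> vt; rewrite vt (sum3 ab ac bc) //.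
  by move=> k kn; rewrite dA_zero ?Hn // mulr0 mul0r oppr0.
rewrite /qt (sum3 ab ac bc); last first.
  by move=> k kn; apply: big1 => j _; rewrite (negbTE (Hn k kn)).
have aIt : a \in t by rewrite Et !inE eqxx.
have bIt : b \in t by rewrite Et !inE eqxx orbT.
have cIt : c \in t by rewrite Et !inE eqxx !orbT.
rewrite (S a aIt) (S b bIt) (S c cIt).
rewrite (dA_val u a tT Et ab ac bc) (dA_val u b tT Et ab ac bc) (dA_val u c tT Et ab ac bc) (dA_val u a tT Etb ba bc ac) (dA_val u b tT Etb ba bc ac) (dA_val u c tT Etb ba bc ac) (dA_val u a tT Etc ca cb ab) (dA_val u b tT Etc ca cb ab) (dA_val u c tT Etc ca cb ab).
rewrite !eqxx (negbTE ab) (negbTE ac) (negbTE bc) (negbTE ba) (negbTE ca) (negbTE cb).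
rewrite (Wv_sym u a b c) (Wv_sym u a c b) (Wv_sym u b c a).
rewrite /=; ring.
Qed.

Lemma Wv_ge0 (u : 'I_nV -> R) (t : {set 'I_nV}) (i p q : 'I_nV) :
  t \in T -> t = [set i; p; q] -> i != p -> i != q -> p != q -> 0 <= Wv u i p q.
Proof.
move=> tT Et ip iq pq.
have it : i \in t by rewrite Et !inE eqxx.
have pt : p \in t by rewrite Et !inE eqxx orbT.
have qt : q \in t by rewrite Et !inE eqxx !orbT.
have [h1 h2 h3] := c1_inst tT Et ip iq pq.
by rewrite /Wv; apply: Wf_ge0 => //; try exact: expR_gt0; apply: Iw_bnd tT _ _ _.
Qed.

Lemma Wv_pair (u : 'I_nV -> R) (t : {set 'I_nV}) (i p q : 'I_nV) :
  t \in T -> t = [set i; p; q] -> i != p -> i != q -> p != q ->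
  0 < Wv u i p q + Wv u i q p.
Proof.
move=> tT Et ip iq pq.
have it : i \in t by rewrite Et !inE eqxx.
have pt : p \in t by rewrite Et !inE eqxx orbT.
have qt : q \in t by rewrite Et !inE eqxx !orbT.
have [h1 h2 h3] := c1_inst tT Et ip iq pq.
by rewrite /Wv (IwC q p); apply: Wf_pair => //; try exact: expR_gt0; apply: Iw_bnd tT _ _ _.
Qed.

Lemma tri_vertices (t : {set 'I_nV}) : t \in T ->
  exists a b c, [/\ a != b, a != c, b != c & t = [set a; b; c]].
Proof.
move=> tT.
have : t != finset.set0 by rewrite -card_gt0 card3.
case/set0Pn => a aIt.
have [p [q [ap aq pq Et]]] := decomp (card3 tT) aIt.
by exists a, p, q.
Qed.

Lemma qt_ge0 (u x : 'I_nV -> R) (t : {set 'I_nV}) : t \in T -> 0 <= qt u x t.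
Proof.
move=> tT; have [a [b [c [ab ac bc Et]]]] := tri_vertices tT.
rewrite (qt_form u x tT Et ab ac bc).
have ba : b != a by rewrite eq_sym.
have Etb : t = [set b; c; a].
  by rewrite Et; apply/setP => k; rewrite !inE; do ![case: (_ == _)].
have := Wv_ge0 u tT Et ab ac bc.
have := Wv_ge0 u tT Et ab ac bc.
have E2 : t = [set a; c; b].
  by rewrite Et; apply/setP => k; rewrite !inE; do ![case: (_ == _)].
have cb : c != b by rewrite eq_sym.
have w2 := Wv_ge0 u tT E2 ac ab cb.
have ca : c != a by rewrite eq_sym.
have w3 := Wv_ge0 u tT Etb bc ba ca.
move=> w1 _.
apply: addr_ge0; first apply: addr_ge0.
all: by apply: mulr_ge0 => //; apply: sqr_ge0.
Qed.

Lemma qt_zero (u x : 'I_nV -> R) (t : {set 'I_nV}) : t \in T -> qt u x t = 0 ->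
  forall v w, v \in t -> w \in t -> x v = x w.
Proof.
move=> tT; have [a [b [c [ab ac bc Et]]]] := tri_vertices tT.
rewrite (qt_form u x tT Et ab ac bc) => H0.
have ba : b != a by rewrite eq_sym.
have ca : c != a by rewrite eq_sym.
have cb : c != b by rewrite eq_sym.
have E2 : t = [set a; c; b].
  by rewrite Et; apply/setP => k; rewrite !inE; do ![case: (_ == _)].
have E3 : t = [set b; c; a].
  by rewrite Et; apply/setP => k; rewrite !inE; do ![case: (_ == _)].
have E4 : t = [set b; a; c].
  by rewrite Et; apply/setP => k; rewrite !inE; do ![case: (_ == _)].
have E5 : t = [set c; a; b].
  by rewrite Et; apply/setP => k; rewrite !inE; do ![case: (_ == _)].
have w1 := Wv_ge0 u tT Et ab ac bc.
have w2 := Wv_ge0 u tT E2 ac ab cb.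
have w3 := Wv_ge0 u tT E3 bc ba ca.
have p12 := Wv_pair u tT Et ab ac bc.
have p13 := Wv_pair u tT E4 ba bc ac.
have p23 := Wv_pair u tT E5 ca cb ab.
rewrite (Wv_sym u a b c) in p13.
rewrite (Wv_sym u a c b) (Wv_sym u b c a) in p23.
have [d1 d2] : x a - x b = 0 /\ x a - x c = 0.
  apply: (kernel3 w1 w2 w3) => //.
  by rewrite -H0; congr (_ + _ * _); congr (_ ^+ 2); ring.
have F v : v \in t -> x v = x a.
  rewrite Et !inE => /orP[/orP[/eqP->|/eqP->]|/eqP->] //.
  - by apply/eqP; rewrite eq_sym -subr_eq0 d1.
  - by apply/eqP; rewrite eq_sym -subr_eq0 d2.
by move=> v w vt wt; rewrite (F v vt) (F w wt).
Qed.

Lemma main_in (u : 'I_nV -> R) :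
  [/\ forall i j : 'I_nV, derivable (Kslice T Theta u i j) (u j) 1,
      forall i j : 'I_nV, jacK T Theta u i j = jacK T Theta u j i,
      forall x : 'I_nV -> R, 0 <= quadK T Theta u x
    & forall x : 'I_nV -> R, \sum_(i < nV) x i = 0 -> (exists i, x i != 0) ->
        0 < quadK T Theta u x].
Proof.
have Q0 x : 0 <= quadK T Theta u x.
  by rewrite quad_split; apply: sumr_ge0 => t tT; apply: qt_ge0.
split => //.
- move=> i j; exact: (@ex_derive _ _ _ _ _ _ _ (Kslice_der u i j)).
- exact: jac_sym.
- move=> x sx [i0 xi0].
  rewrite lt_neqAle Q0 andbT eq_sym; apply/negP => /eqP H0.
  have Hq : forall t, t \in T -> qt u x t = 0.
    move=> t tT; move: H0; rewrite quad_split => H0.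
    exact: (psumr_eq0P (fun t tT => qt_ge0 u x tT) H0).
  have Hadj : forall a b, adj T a b -> x a = x b.
    move=> a b /andP[_ /andP[_ /existsP[t /andP[tT sub]]]].
    have aIt : a \in t by apply: (fintype.subsetP sub); rewrite !inE eqxx.
    have bIt : b \in t by apply: (fintype.subsetP sub); rewrite !inE eqxx orbT.
    exact: (qt_zero tT (Hq t tT)).
  have Hcon : forall a b, connect (adj T) a b -> x a = x b.
    move=> a b /connectP[pth pP ->]; elim: pth a pP => //= c pth IH a /andP[hac hp].
    by rewrite (Hadj a c hac) (IH c hp).
  have Hall k : x k = x i0.
    by case: Hsurf => _ _ _ _ Hc; exact: Hcon (Hc k i0).
  move: sx; rewrite (eq_bigr (fun _ => x i0)); last by move=> k _; rewrite Hall.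
  rewrite sumr_const card_ord => /eqP; rewrite mulrn_eq0 (negbTE xi0) orbF => /eqP n0.
  by have := ltn_ord i0; move: (nat_of_ord i0) => k; rewrite n0.
Qed.
End Geo.

Theorem lemma3p1 (R : realType) (nV : nat) (T : {set {set 'I_nV}})
    (Theta : {set 'I_nV} -> R) :
  is_surface_triangulation T ->
  (forall e, is_edge T e -> 0 <= Theta e < pi) ->
  C1 T Theta ->
  forall u : 'I_nV -> R,
  [/\ forall i j : 'I_nV, derivable (Kslice T Theta u i j) (u j) 1,
      forall i j : 'I_nV, jacK T Theta u i j = jacK T Theta u j i,
      forall x : 'I_nV -> R, 0 <= quadK T Theta u x
    & forall x : 'I_nV -> R, \sum_(i < nV) x i = 0 -> (exists i, x i != 0) ->
        0 < quadK T Theta u x].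
Proof.
move=> Hs HTh HC u; exact: (@main_in R nV T Theta HTh HC Hs u).
Qed.
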